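(* Let $L>0$ and assume there are continuous functions $f:[-L,L]\times[0,\infty)\to\mathbb{R}$, $g:[0,\infty)\to\mathbb{R}$ and a constant $K>0$ such that (i) $g(0)>0$, $g$ is strictly increasing, and with $G(s):=\int_K^sg(t)\,dt$ one has $\lim_{s\to\infty}s/\sqrt{G(s)}=0$; (ii) $f(x,s)\ge g(s)$ for all $s\ge K$, $x\in[-L,L]$. Let $\lambda_0=(\pi/L)^2$. Then: (a) there exists $A>0$ such that $f(x,s)\ge\lambda_0s-A$ for all $s\ge0$ and all $x\in[-L,L]$; (b) for every $R>K$, $$\int_0^R\frac{ds}{\sqrt{G(R)-G(s)}}\le\frac{2R}{\sqrt{G(R)}}.$$ *)

(* Defs.v *)
From HB Require Import structures.
From mathcomp Require Import all_boot all_order all_algebra.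
From mathcomp Require Import all_classical all_reals all_analysis.
Set Implicit Arguments. Unset Strict Implicit. Unset Printing Implicit Defensive.
Import Order.TTheory GRing.Theory Num.Theory.
Import numFieldNormedType.Exports.
Local Open Scope classical_set_scope.
Local Open Scope ring_scope.

Definition primK (R : realType) (g : R -> R) (K s : R) : R :=
  if K <= s then Rintegral lebesgue_measure `[K, s] g
  else - Rintegral lebesgue_measure `[s, K] g.

(* Main.v *)
Require Import Defs.
From HB Require Import structures.
From mathcomp Require Import all_boot all_order all_algebra.
From mathcomp Require Import all_classical all_reals all_analysis.
From mathcomp Require Import ring lra measurable_realfun.
Import Order.TTheory GRing.Theory Num.Theory.
Import numFieldNormedType.Exports.
Local Open Scope classical_set_scope.
Local Open Scope ring_scope.
Lemma mu_cc (R : realType) (a b : R) : a <= b ->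
  fine (@lebesgue_measure R `[a, b]) = b - a.
Proof.
move=> ab; rewrite lebesgue_measure_itv /= lte_fin.
have [->|nab] := eqVneq a b; first by rewrite ltxx subrr.
by rewrite lt_neqAle nab ab.
Qed.

Lemma int_cont (R : realType) (g : R -> R) (a b : R) :
  {within `[a, b], continuous g} ->
  (@lebesgue_measure R).-integrable `[a, b] (EFin \o g).
Proof.
move=> hg; apply: continuous_compact_integrable => //; exact: segment_compact.
Qed.

Lemma sub_cc0 (R : realType) (a b : R) : 0 <= a -> `[a, b] `<=` `[0, +oo[.
Proof.
move=> a0 x /=; rewrite !in_itv /= => /andP[ax _]; by rewrite (le_trans a0 ax).
Qed.

Lemma Iadd (R : realType) (g : R -> R) (a b c : R) : a <= b -> b <= c ->
  (@lebesgue_measure R).-integrable `[a, c] (EFin \o g) ->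
  Rintegral (@lebesgue_measure R) `[a, c] g =
  Rintegral (@lebesgue_measure R) `[a, b] g + Rintegral (@lebesgue_measure R) `[b, c] g.
Proof.
move=> ab bc hi.
have := @Rintegral_itvB R g (BLeft a) (BRight c) b hi.
rewrite !bnd_simp => /(_ ab bc) H.
rewrite -(@Rintegral_itv_obnd_cbnd R b (BRight c)); last first.
  apply: integrableS hi => //; apply: subset_itv; rewrite bnd_simp //.
rewrite -H; rewrite addrC subrK //.
Qed.

Lemma Ilow (R : realType) (g : R -> R) (a b c : R) : a <= b ->
  {within `[a, b], continuous g} ->
  (forall x, a <= x <= b -> c <= g x) ->
  (b - a) * c <= Rintegral (@lebesgue_measure R) `[a, b] g.
Proof.
move=> ab hg hc.
have -> : (b - a) * c = Rintegral (@lebesgue_measure R) `[a, b] (fun _ => c).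
  by rewrite Rintegral_cst // mu_cc // mulrC.
apply: le_Rintegral => //;
  try (by move=> x /=; rewrite in_itv /= => /hc);
  try (by apply: int_cont; apply: continuous_subspaceT; exact: cst_continuous);
  exact: int_cont.
Qed.

Lemma Iup (R : realType) (g : R -> R) (a b c : R) : a <= b ->
  {within `[a, b], continuous g} ->
  (forall x, a <= x <= b -> g x <= c) ->
  Rintegral (@lebesgue_measure R) `[a, b] g <= (b - a) * c.
Proof.
move=> ab hg hc.
have -> : (b - a) * c = Rintegral (@lebesgue_measure R) `[a, b] (fun _ => c).
  by rewrite Rintegral_cst // mu_cc // mulrC.
apply: le_Rintegral => //;
  try (by move=> x /=; rewrite in_itv /= => /hc);
  try (by apply: int_cont; apply: continuous_subspaceT; exact: cst_continuous);
  exact: int_cont.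
Qed.
Lemma box_lb (R : realType) (L K : R) (f : R -> R -> R)
  (hf : {within [set p : R * R | (- L <= p.1 <= L) /\ 0 <= p.2],
          continuous (fun p : R * R => f p.1 p.2)}) :
  exists B : R, forall x s, - L <= x <= L -> 0 <= s <= K -> - B <= f x s.
Proof.
pose P : set (R * R) := `[- L, L] `*` `[0, K].
have cP : compact P by apply: compact_setX; exact: segment_compact.
have hfP : {within P, continuous (fun p : R * R => f p.1 p.2)}.
  apply: continuous_subspaceW hf => -[x s] [/=]; rewrite !in_itv /= => hx /andP[hs _].
  by split.
have /compact_bounded [M [_ HM]] := continuous_compact hfP cP.
exists (M + 1) => x s hx hs.
have hM1 : M < M + 1 by rewrite ltrDl ltr01.
have Pxs : ((fun p : R * R => f p.1 p.2) @` P) (f x s).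
  by exists (x, s) => //; split; rewrite /= in_itv /=.
have /= H := HM (M + 1) hM1 _ Pxs.
have := ler_norm (- f x s); rewrite normrN => H2.
rewrite lerNl; exact: le_trans H2 H.
Qed.
Lemma big_g (R : realType) (K lam : R) (g : R -> R)
  (hK : 0 < K) (hlam : 0 <= lam)
  (hG : (fun s : R => s / Num.sqrt (primK g K s)) x @[x --> +oo] --> 0)
  (Gpos : forall s, K < s -> 0 < primK g K s)
  (Gle : forall s, K < s -> primK g K s <= s * g s) :
  exists S, K <= S /\ forall s, S <= s -> lam * s <= g s.
Proof.
have c0 : 0 < lam + 1 by lra.
move/cvgrPdist_lt: hG => /(_ (lam + 1)^-1).
rewrite invr_gt0 c0 => /(_ isT) [M [_ HM]].
have hMm : M <= Num.max M K by rewrite le_max lexx.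
have hKm : K <= Num.max M K by rewrite le_max lexx orbT.
exists (Num.max M K + 1); split; first lra.
move=> s hs.
have sM : M < s by lra.
have sK : K < s by lra.
have := HM s sM; rewrite /= sub0r normrN.
have Gp := Gpos s sK.
have Gl := Gle s sK.
set G := primK g K s in Gp Gl *.
have t0 : 0 < Num.sqrt G by rewrite sqrtr_gt0.
have tt : Num.sqrt G ^+ 2 = G by rewrite sqr_sqrtr // ltW.
have s0 : 0 < s by lra.
rewrite ger0_norm; last by rewrite divr_ge0 // ltW.
rewrite ltr_pdivrMr // => H.
have H2 : s * (lam + 1) < Num.sqrt G.
  by rewrite -ltr_pdivlMr // mulrC.
set t := Num.sqrt G in t0 tt H2 *.
have H3 : (s * (lam + 1)) ^+ 2 < G.
  rewrite -tt; rewrite ltr_pXn2r //; first by rewrite nnegrE mulr_ge0 // ltW.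
  by rewrite nnegrE ltW.
nra.
Qed.
Lemma sq_der (R : realType) (Rr x : R) : x < Rr ->
  is_derive x 1 ((-2) \*: (Num.sqrt \o (fun y => Rr - y)))
    ((Num.sqrt (Rr - x))^-1).
Proof.
move=> xR.
have d1 : is_derive x 1 (fun y : R => Rr - y) (-1).
  have H := @is_deriveB R R R (cst Rr) id x 1 0 1 _ _.
  rewrite sub0r in H; exact: H.
have p0 : 0 < Rr - x by rewrite subr_gt0.
have d2 := @is_derive1_comp R Num.sqrt (fun y => Rr - y) x _ _
  (@is_derive1_sqrt R (Rr - x) p0) d1.
have s0 : Num.sqrt (Rr - x) != 0 by rewrite sqrtr_eq0 -ltNge subr_gt0.
have E : (-2) *: ((2 * Num.sqrt (Rr - x))^-1 * -1) = (Num.sqrt (Rr - x))^-1.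
  rewrite [LHS]/GRing.scale /=. field. by rewrite s0.
rewrite -E; exact: (@is_deriveZ R R R _ (-2) x 1 _ d2).
Qed.

Lemma h_cont (R : realType) (Rr x : R) : x < Rr ->
  {for x, continuous (fun s : R => (Num.sqrt (Rr - s))^-1)}.
Proof.
move=> xR; apply: continuousV.
  by rewrite sqrtr_eq0 -ltNge subr_gt0.
apply: (@continuous_comp _ _ _ (fun y : R => Rr - y) Num.sqrt).
  apply: continuousB; [exact: cst_continuous| exact: cvg_id].
exact: sqrt_continuous.
Qed.

Lemma F_cont (R : realType) (Rr x : R) : x < Rr ->
  {for x, continuous ((-2) \*: (Num.sqrt \o (fun y : R => Rr - y)))}.
Proof.
move=> xR; have [d _] := @sq_der R Rr x xR.
by apply/differentiable_continuous; rewrite -derivable1_diffP.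
Qed.

Lemma ftc_piece (R : realType) (Rr b : R) : 0 < b -> b < Rr ->
  (\int[@lebesgue_measure R]_(x in `[0%R, b]) ((Num.sqrt (Rr - x))^-1)%:E
    <= (2 * Num.sqrt Rr)%:E)%E.
Proof.
move=> b0 bR.
rewrite (@continuous_FTC2 R (fun s : R => (Num.sqrt (Rr - s))^-1)
   ((-2) \*: (Num.sqrt \o (fun y : R => Rr - y))) 0 b b0).
- rewrite -EFinB lee_fin /= /GRing.scale /= subr0.
  have := sqrtr_ge0 (Rr - b); lra.
- apply: continuous_in_subspaceT => x; rewrite inE /= in_itv /= => /andP[_ xb].
  apply: h_cont; lra.
- split.
  + move=> x; rewrite in_itv /= => /andP[_ xb].
    have [d _] := @sq_der R Rr x ltac:(lra); exact: d.
  + apply: cvg_at_right_filter; apply: F_cont; lra.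
  + apply: cvg_at_left_filter; apply: F_cont; lra.
- move=> x; rewrite in_itv /= => /andP[_ xb].
  rewrite derive1E; have [_ ->] := @sq_der R Rr x ltac:(lra); done.
Qed.

Lemma hpow (R : realType) (y : R) : 0 <= y -> (Num.sqrt y)^-1 = y `^ (- 2^-1).
Proof. by move=> y0; rewrite powRN powR12_sqrt. Qed.

Lemma int_h (R : realType) (Rr : R) : 0 < Rr ->
  (\int[@lebesgue_measure R]_(x in `[0%R, Rr]) ((Num.sqrt (Rr - x))^-1)%:E
    <= (2 * Num.sqrt Rr)%:E)%E.
Proof.
move=> R0.
set h := fun x : R => (Num.sqrt (Rr - x))^-1.
set D : set R := [set` `[0%R, Rr]].
have mD : measurable D by exact: measurable_itv.
have h0 x : 0 <= h x by rewrite /h invr_ge0 sqrtr_ge0.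
have mh : measurable_fun D h.
  apply: (@eq_measurable_fun _ _ _ _ D (fun x => (Rr - x) `^ (- 2^-1))).
    move=> x; rewrite inE /D /= in_itv /= => /andP[_ xR].
    by rewrite /h hpow // subr_ge0.
  have mB : measurable_fun D (fun x : R => Rr - x).
    by apply: measurable_realfun.measurable_funB => //; apply: measurable_cst.
  exact: (measurableT_comp (measurable_realfun.measurable_powR _) mB).
pose c (n : nat) : R := Rr - Rr / (n.+2)%:R.
have c0 n : 0 < c n.
  rewrite /c subr_gt0 ltr_pdivrMr ?ltr0n // ltr_pMr // ltr1n //.
have cR n : c n < Rr by rewrite /c ltrBlDr ltrDl divr_gt0 ?ltr0n.
have cnd m n : (m <= n)%N -> c m <= c n.
  move=> mn; rewrite /c; apply: lerB => //; rewrite ler_pM2l // lef_pV2 ?posrE ?ltr0n //.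
  by rewrite ler_nat ltnS ltnS.
pose g' (n : nat) : R -> \bar R := ((EFin \o h) \_ [set` `[0%R, c n]]).
have g'0 n x : D x -> (0 <= g' n x)%E.
  by move=> _; rewrite /g' patchE; case: ifP => //= _; rewrite lee_fin.

have mg' (n : nat) : measurable_fun D ((EFin \o h) \_ [set` `[0%R, c n]]).
  apply/(measurable_restrict (EFin \o h)) => //.
  apply/measurable_EFinP; apply: (measurable_funS mD _ mh); by move=> ? [].

have nd_g' x : D x -> nondecreasing_seq (g'^~ x).
  move=> Dx m n mn; rewrite /g' !patchE.
  case: ifP => [xm|_].
    rewrite ifT //; move: xm; rewrite !inE /= !in_itv /= => /andP[-> xm].
    by rewrite (le_trans xm (cnd _ _ mn)).
  by case: ifP => //= _; rewrite lee_fin.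
have CV := @cvg_monotone_convergence _ _ _ lebesgue_measure D mD g' mg' g'0 nd_g'.
have hR : h Rr = 0 by rewrite /h subrr sqrtr0 invr0.
have E1 : (\int[lebesgue_measure]_(x in D) (h x)%:E =
           \int[lebesgue_measure]_(x in D) limn (g'^~ x))%E.
  apply: eq_integral => x; rewrite inE /D /= in_itv /= => /andP[x0 xR].
  have [xe|xlt] := eqVneq x Rr.
    rewrite xe; apply/esym/cvg_lim => //; apply: cvg_near_cst.
    by apply: nearW => n; rewrite /g' patchE /= hR; case: ifP.
  apply/esym/cvg_lim => //; apply: cvg_near_cst.
  have xlt' : x < Rr by rewrite lt_neqAle xlt xR.
  have e0 : 0 < (Rr - x) / Rr by rewrite divr_gt0 // subr_gt0.
  have := @near_infty_natSinv_lt R (PosNum e0); apply: filterS => n /= Hn.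
  have xin : x \in [set` `[0%R, c n]].
    rewrite inE /= in_itv /= x0 /= /c.
    have ba : (n.+2)%:R^-1 <= (n.+1)%:R^-1 :> R.
      by rewrite lef_pV2 ?posrE ?ltr0n // ler_nat.
    have Eq : Rr * ((Rr - x) / Rr) = Rr - x by rewrite mulrC divfK // gt_eqF.
    set a := (n.+1)%:R^-1 in ba Hn.
    set b := (n.+2)%:R^-1 in ba *.
    set q := (Rr - x) / Rr in Hn Eq.
    nra.
  by rewrite /g' patchE xin.
rewrite E1 -(cvg_lim _ CV) //.
apply: lime_le; first by apply/cvg_ex; eexists; exact: CV.
apply: nearW => n.
rewrite /g' -integral_mkcondr setIidr.
  exact: ftc_piece.
move=> x /=; rewrite !in_itv /= => /andP[x0 xc]; rewrite /D /= in_itv /= x0 /=.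
exact: (le_trans xc (ltW (cR n))).
Qed.
Arguments sub_cc0 {R}.
Arguments box_lb {R L} K {f}.
Arguments big_g {R K lam g}.
Arguments int_cont {R g a b}.

Lemma Hnd (R : realType) (g : R -> R)
  (hg : {within `[0, +oo[, continuous g})
  (gpos : forall s, 0 <= s -> 0 < g s) :
  {homo (fun s => Rintegral (@lebesgue_measure R) `[0%R, s] g) : x y / x <= y}.
Proof.
have H0 s : s < 0 -> Rintegral (@lebesgue_measure R) `[0%R, s] g = 0.
  move=> s0; rewrite set_itv_ge ?Rintegral_set0 // bnd_simp -ltNge //.
have Inn a b : 0 <= a -> a <= b -> 0 <= Rintegral (@lebesgue_measure R) `[a, b] g.
  move=> a0 ab.
  have := @Ilow R g a b 0 ab (continuous_subspaceW (sub_cc0 a b a0) hg).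
  rewrite mulr0; apply.
  move=> x /andP[ax _]; apply/ltW/gpos; exact: le_trans ax.
move=> s t st /=.
have [s0|s0] := ltP s 0.
  rewrite H0 //; have [t0|t0] := ltP t 0; first by rewrite H0.
  exact: Inn.
rewrite (@Iadd R g 0 s t s0 st).
  by rewrite lerDl; apply: Inn.
apply: int_cont; exact: continuous_subspaceW (sub_cc0 0 t (lexx 0)) hg.
Qed.

Theorem mainTheorem12 (R : realType) (L K : R) (f : R -> R -> R) (g : R -> R)
  (hL : 0 < L) (hK : 0 < K)
  (hf : {within [set p : R * R | (- L <= p.1 <= L) /\ 0 <= p.2],
          continuous (fun p : R * R => f p.1 p.2)})
  (hg : {within `[0, +oo[, continuous g})
  (hg0 : 0 < g 0)
  (hginc : forall s t : R, 0 <= s -> s < t -> g s < g t)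
  (hG : (fun s : R => s / Num.sqrt (primK g K s)) x @[x --> +oo] --> 0)
  (hfg : forall x s : R, - L <= x <= L -> K <= s -> g s <= f x s) :
  (exists A : R, 0 < A /\
     forall x s : R, - L <= x <= L -> 0 <= s ->
       (pi / L) ^+ 2 * s - A <= f x s)
  /\
  (forall Rr : R, K < Rr ->
     (\int[lebesgue_measure]_(s in `[0%R, Rr])
        ((Num.sqrt (primK g K Rr - primK g K s))^-1)%:E
      <= (2 * Rr / Num.sqrt (primK g K Rr))%:E)%E).
Proof.
have gle s t : 0 <= s -> s <= t -> g s <= g t.
  move=> s0; rewrite le_eqVlt => /predU1P[->//|st]; exact/ltW/hginc.
have gpos s : 0 <= s -> 0 < g s.
  move=> s0; apply: lt_le_trans hg0 _; exact: gle.
have gcont a b : 0 <= a -> {within `[a, b], continuous g}.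
  by move=> a0; exact: continuous_subspaceW (sub_cc0 a b a0) hg.
have gint a b : 0 <= a -> (@lebesgue_measure R).-integrable `[a, b] (EFin \o g).
  by move=> a0; apply: int_cont; exact: gcont.
pose I a b := Rintegral (@lebesgue_measure R) `[a, b] g.
have Ilo a b : 0 <= a -> a <= b -> (b - a) * g a <= I a b.
  move=> a0 ab; apply: Ilow => //; first exact: gcont.
  by move=> x /andP[ax _]; apply: gle.
have Ihi a b : 0 <= a -> a <= b -> I a b <= (b - a) * g b.
  move=> a0 ab; apply: Iup => //; first exact: gcont.
  by move=> x /andP[ax xb]; apply: gle => //; exact: le_trans ax.
have Iad a b c : 0 <= a -> a <= b -> b <= c -> I a c = I a b + I b c.
  by move=> a0 ab bc; apply: Iadd => //; exact: gint.
have PK s : K <= s -> primK g K s = I K s by move=> Ks; rewrite /primK Ks.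
have Gpos s : K < s -> 0 < primK g K s.
  move=> Ks; rewrite PK; last exact: ltW.
  apply: lt_le_trans (Ilo _ _ (ltW hK) (ltW Ks)).
  by rewrite mulr_gt0 ?subr_gt0 // gpos // ltW.
have Gle s : K < s -> primK g K s <= s * g s.
  move=> Ks; rewrite PK; last exact: ltW.
  apply: (le_trans (Ihi _ _ (ltW hK) (ltW Ks))).
  have := gpos s (ltW (lt_trans hK Ks)); nra.
split.
  set lam := (pi / L) ^+ 2.
  have lam0 : 0 <= lam by rewrite /lam sqr_ge0.
  have [B hB] := box_lb K hf.
  have [S [KS hS]] := big_g hK lam0 hG Gpos Gle.
  have lS : 0 <= lam * S by rewrite mulr_ge0 // (le_trans (ltW hK)).
  have nB := ler_norm (lam * K + B).
  exists (1 + `|lam * K + B| + lam * S); split.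
    have := normr_ge0 (lam * K + B); lra.
  move=> x s hx s0.
  have [sK|sK] := leP s K.
    have := hB x s hx; rewrite s0 sK => /(_ isT) hb.
    have : lam * s <= lam * K by rewrite ler_wpM2l.
    lra.
  have fg := hfg x s hx (ltW sK).
  have [Ss|sS] := leP S s.
    have := hS s Ss; have := normr_ge0 (lam * K + B); lra.
  have : lam * s <= lam * S by rewrite ler_wpM2l // ltW.
  have := gpos s s0; have := normr_ge0 (lam * K + B); lra.
move=> Rr KR.
have R0 : 0 < Rr by exact: lt_trans hK KR.
set GR := primK g K Rr.
have GR0 : 0 < GR := Gpos _ KR.
have diff s : 0 <= s <= Rr -> GR - primK g K s = I s Rr.
  move=> /andP[s0 sR]; rewrite /GR PK ?ltW //.
  have [Ks|sK] := leP K s.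
    by rewrite PK // (Iad K s Rr) ?(ltW hK) // addrC addKr.
  rewrite /primK leNgt sK /= opprK (Iad s K Rr) // ?ltW //.
  by rewrite addrC.
have key s : 0 <= s <= Rr -> (Rr - s) * GR <= Rr * I s Rr.
  move=> /andP[s0 sR].
  have e1 := Iad 0 s Rr (lexx 0) s0 sR.
  have e2 := Iad 0 K Rr (lexx 0) (ltW hK) (ltW KR).
  have i0K : 0 <= I 0 K.
    apply: le_trans (Ilo 0 K (lexx 0) (ltW hK)).
    by rewrite mulr_ge0 ?subr_ge0 ?(ltW hK) ?(ltW hg0).
  have a1 := Ihi 0 s (lexx 0) s0.
  have a2 := Ilo s Rr s0 sR.
  have GE : GR = I K Rr by rewrite /GR PK // ltW.
  rewrite GE; rewrite subr0 in a1.
  have : 0 <= Rr - s by rewrite subr_ge0.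
  nra.
set D : set R := [set` `[0%R, Rr]].
have mD : measurable D by exact: measurable_itv.
set h := fun x : R => (Num.sqrt (Rr - x))^-1.
set c := Num.sqrt Rr / Num.sqrt GR.
have c0 : 0 <= c by rewrite /c divr_ge0 // sqrtr_ge0.
set Phi := fun s => (Num.sqrt (GR - primK g K s))^-1.
have hR : h Rr = 0 by rewrite /h subrr sqrtr0 invr0.
have Idiff s : 0 <= s <= Rr -> I s Rr = I 0 Rr - I 0 s.
  move=> /andP[s0 sR]; rewrite (Iad 0 s Rr) // addrC addKr //.
have Inn s : 0 <= s <= Rr -> 0 <= I s Rr.
  move=> /andP[s0 sR]; apply: le_trans (Ilo s Rr s0 sR).
  by rewrite mulr_ge0 ?subr_ge0 // ltW // gpos.
have ptw s : D s -> Phi s <= c * h s.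
  rewrite /D /= in_itv /= => sD.
  rewrite /Phi diff //.
  have [sR|sR] := eqVneq s Rr.
    have := Ihi s Rr; rewrite sR subrr mul0r => /(_ (ltW R0) (lexx _)) Ile.
    have := Inn Rr; rewrite (ltW R0) lexx => /(_ isT) Ige.
    have -> : I Rr Rr = 0 by apply/eqP; rewrite eq_le Ile Ige.
    by rewrite hR sqrtr0 invr0 mulr0.
  have sR' : s < Rr by rewrite lt_neqAle sR; case/andP: sD.
  have ks := key s sD.
  set d := I s Rr in ks *.
  have d0 : 0 < d.
    have : 0 < (Rr - s) * GR by rewrite mulr_gt0 // subr_gt0.
    move=> p; have : 0 < Rr * d by exact: lt_le_trans ks.
    by rewrite pmulr_rgt0.
  have u0 : 0 < Num.sqrt d by rewrite sqrtr_gt0.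
  have v0 : 0 < Num.sqrt (Rr - s) by rewrite sqrtr_gt0 subr_gt0.
  have a0 : 0 < Num.sqrt Rr by rewrite sqrtr_gt0.
  have b0 : 0 < Num.sqrt GR by rewrite sqrtr_gt0.
  have bv : Num.sqrt GR * Num.sqrt (Rr - s) <= Num.sqrt Rr * Num.sqrt d.
    rewrite -!sqrtrM ?(ltW GR0) ?(ltW R0) //.
    rewrite ler_sqrt; first nra.
    by rewrite mulr_ge0 // ltW.
  rewrite /h /c -subr_ge0.
  have -> : Num.sqrt Rr / Num.sqrt GR * (Num.sqrt (Rr - s))^-1 - (Num.sqrt d)^-1
      = (Num.sqrt Rr * Num.sqrt d - Num.sqrt GR * Num.sqrt (Rr - s)) /
        (Num.sqrt GR * Num.sqrt (Rr - s) * Num.sqrt d).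
    field.
    by rewrite !gt_eqF.
  by rewrite divr_ge0 ?subr_ge0 // !mulr_ge0 // ltW.
have mPhi : measurable_fun D Phi.
  apply: (@eq_measurable_fun _ _ _ _ D (fun x => (I 0 Rr - I 0 x) `^ (- 2^-1))).
    move=> x; rewrite inE /D /= in_itv /= => xD.
    rewrite /Phi diff // -Idiff // hpow //; exact: Inn.
  have mH : measurable_fun D (fun x => I 0 Rr - I 0 x).
    apply: measurable_funB; first exact: measurable_cst.
    apply: nondecreasing_measurable => //.
    exact: Hnd.
  exact: (measurableT_comp (measurable_powR _) mH).
have mh0 : measurable_fun D h.
  apply: (@eq_measurable_fun _ _ _ _ D (fun x => (Rr - x) `^ (- 2^-1))).
    move=> x; rewrite inE /D /= in_itv /= => /andP[_ xR].
    by rewrite /h hpow // subr_ge0.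
  have mB : measurable_fun D (fun x : R => Rr - x).
    by apply: measurable_funB => //; apply: measurable_cst.
  exact: (measurableT_comp (measurable_powR _) mB).
have mh : measurable_fun D (fun x => c * h x).
  by apply: measurable_funM => //; exact: measurable_cst.
have h0 x : 0 <= h x by rewrite /h invr_ge0 sqrtr_ge0.
apply: (@le_trans _ _ (\int[lebesgue_measure]_(x in D) ((c * h x)%:E))%E).
  apply: ge0_le_integral => //.
  all: try (by move=> x _; rewrite lee_fin invr_ge0 sqrtr_ge0).
  all: try (by move=> x Dx; rewrite lee_fin; exact: ptw).
  all: try (exact/measurable_EFinP).
under eq_integral do rewrite EFinM.
rewrite ge0_integralZl_EFin //; last 2 first.
  - by move=> x _; rewrite lee_fin.
  - exact/measurable_EFinP.
apply: (@le_trans _ _ (c%:E * (2 * Num.sqrt Rr)%:E)%E).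
  by apply: lee_wpmul2l; [rewrite lee_fin | exact: int_h].
rewrite -EFinM lee_fin.
have sq : Num.sqrt Rr ^+ 2 = Rr by rewrite sqr_sqrtr // ltW.
rewrite -{2}sq /c le_eqVlt; apply/orP; left; apply/eqP.
field; by rewrite gt_eqF // sqrtr_gt0.
Qed.
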